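(* Every D-finite power series $f\in\mathbb{C}[[x]]$ is eventually stable: there exists $m\in\mathbb{N}$ such that $\mathrm{int}^m(f)$ is stable.
   Context: Let $\delta=d/dx$ on $\mathbb{C}[[x]]$ and $\mathbb{C}(x)$, and let $\mathbb{C}(x)\langle D\rangle$ be the ring of linear differential operators $\sum_i \ell_i D^i$ ($\ell_i\in\mathbb{C}(x)$) acting by $D(h)=\delta(h)$, with $D\cdot r=r\cdot D+\delta(r)$. A power series $h\in\mathbb{C}[[x]]$ is D-finite if some nonzero $L\in\mathbb{C}(x)\langle D\rangle$ (an annihilator) satisfies $L(h)=0$; its minimal annihilator is a nonzero annihilator of least order. For $h=\sum_{n\ge0}a_nx^n$, the formal integral is $\mathrm{int}(h)=\sum_{n\ge1}\frac{a_{n-1}}{n}x^n$, and $\mathrm{int}^m$ is its $m$-fold iterate. A D-finite power series $h$ is stable if there is a sequence $(g_i)_{i\in\mathbb{N}}$ in $\mathbb{C}[[x]]$ with $g_0=h$, $g_i=\delta(g_{i+1})$ for all $i$, and all $g_i$ have (minimal) annihilators of the same order. *)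

(* Defs.v *)
From HB Require Import structures.
From mathcomp Require Import all_boot all_order all_algebra.
From mathcomp Require Import reals.
From mathcomp Require Export complex.
Set Implicit Arguments. Unset Strict Implicit. Unset Printing Implicit Defensive.
Import Order.TTheory GRing.Theory Num.Theory.
Local Open Scope ring_scope.

(* Formal power series over a field K, represented by their coefficient
   sequences: h = \sum_n h n x^n. *)
Definition fps (K : fieldType) := nat -> K.

Section FPS.
Variable K : fieldType.

Definition fps_deriv (h : fps K) : fps K := fun n => (n.+1)%:R * h n.+1.

Definition fps_int (h : fps K) : fps K :=
  fun n => if n is k.+1 then h k / (n%:R) else 0.

Definition fps_polymul (p : {poly K}) (h : fps K) : fps K :=
  fun n => \sum_(i < n.+1) p`_i * h (n - i)%N.

Definition apply_op (L : seq {poly K}) (h : fps K) : fps K :=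
  fun n => \sum_(i < size L) fps_polymul L`_i (iter i fps_deriv h) n.

(* h has an annihilator of order r: a nonzero operator sum_{i<=r} l_i D^i
   with leading coefficient l_r <> 0 (coefficients cleared of denominators) such that L(h) = 0. *)
Definition has_annihilator_of_order (h : fps K) (r : nat) : Prop :=
  exists L : seq {poly K},
    size L = r.+1 /\ last 0 L != 0 /\ (forall n, apply_op L h n = 0).

Definition Dfinite (h : fps K) : Prop := exists r, has_annihilator_of_order h r.

Definition min_annihilator_order (h : fps K) (r : nat) : Prop :=
  has_annihilator_of_order h r /\
  (forall s, has_annihilator_of_order h s -> (r <= s)%N).

Definition stable (h : fps K) : Prop :=
  Dfinite h /\
  exists g : nat -> fps K,
    g 0%N = h /\ (forall i, g i = fps_deriv (g i.+1)) /\
    exists r, forall i, min_annihilator_order (g i) r.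

End FPS.

(* Main.v *)
Require Import Defs.
From mathcomp Require Import all_boot all_order all_algebra.
From mathcomp Require Import reals complex.
From mathcomp Require Import zify ring.
From Stdlib Require Import Classical FunctionalExtensionality.
Import Order.TTheory GRing.Theory Num.Theory.
Local Open Scope ring_scope.


Section Aux.
Variable K : numFieldType.
Implicit Types (p q : {poly K}) (g h : fps K) (L : seq {poly K}).

Definition Tr (n : nat) g : {poly K} := \poly_(k < n.+1) g k.

Lemma polymulE p g n (A : {poly K}) :
  (forall k, (k <= n)%N -> A`_k = g k) -> fps_polymul p g n = (p * A)`_n.
Proof.
move=> HA; rewrite /fps_polymul coefM; apply: eq_bigr => i _.
by rewrite HA // leq_subr.
Qed.

Lemma polymulT p g n : fps_polymul p g n = (p * Tr n g)`_n.
Proof. by apply: polymulE => k Hk; rewrite coef_poly ltnS Hk. Qed.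

Lemma polymul_assoc p q g n :
  fps_polymul p (fps_polymul q g) n = fps_polymul (p * q) g n.
Proof.
rewrite (@polymulE _ _ _ (q * Tr n g)); last first.
  move=> k Hk; rewrite (@polymulE q g k (Tr n g)) //.
  by move=> k' Hk'; rewrite coef_poly ltnS (leq_trans Hk' Hk).
by rewrite mulrA polymulT.
Qed.

Lemma polymul_deriv p g n :
  fps_deriv (fps_polymul p g) n =
  fps_polymul p^`() g n + fps_polymul p (fps_deriv g) n.
Proof.
rewrite /fps_deriv (polymulT p g n.+1).
have -> : (n.+1)%:R * (p * Tr n.+1 g)`_n.+1 = (p * Tr n.+1 g)^`()`_n.
  by rewrite coef_deriv mulr_natl.
rewrite derivM coefD.
congr (_ + _).
  rewrite (@polymulE _ _ _ (Tr n.+1 g)) // => k Hk.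
  by rewrite coef_poly ltnS (leq_trans Hk).
rewrite (@polymulE _ _ _ (Tr n.+1 g)^`()) // => k Hk.
by rewrite coef_deriv coef_poly ltnS ltnS Hk mulr_natl.
Qed.

Lemma polymul0f g n : fps_polymul 0 g n = 0.
Proof. by rewrite /fps_polymul big1 // => i _; rewrite coef0 mul0r. Qed.

Lemma polymulf0 p g n : (forall k, g k = 0) -> fps_polymul p g n = 0.
Proof. by move=> H; rewrite /fps_polymul big1 // => i _; rewrite H mulr0. Qed.

Lemma polymulDl p q g n :
  fps_polymul (p + q) g n = fps_polymul p g n + fps_polymul q g n.
Proof. by rewrite /fps_polymul -big_split; apply: eq_bigr => i _; rewrite coefD mulrDl. Qed.

Lemma polymulNl p g n : fps_polymul (- p) g n = - fps_polymul p g n.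
Proof. by rewrite /fps_polymul -sumrN; apply: eq_bigr => i _; rewrite coefN mulNr. Qed.

Lemma polymulDr p g1 g2 n :
  fps_polymul p (fun k => g1 k + g2 k) n = fps_polymul p g1 n + fps_polymul p g2 n.
Proof. by rewrite /fps_polymul -big_split; apply: eq_bigr => i _; rewrite mulrDr. Qed.

Lemma polymulNr p g n :
  fps_polymul p (fun k => - g k) n = - fps_polymul p g n.
Proof. by rewrite /fps_polymul -sumrN; apply: eq_bigr => i _; rewrite mulrN. Qed.

Lemma polymul_sum p (I : nat) (F : nat -> fps K) n :
  fps_polymul p (fun k => \sum_(i < I) F i k) n = \sum_(i < I) fps_polymul p (F i) n.
Proof.
rewrite /fps_polymul exchange_big /=; apply: eq_bigr => j _.
by rewrite mulr_sumr.
Qed.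

Lemma polymul_ext p g1 g2 n : (forall k, g1 k = g2 k) ->
  fps_polymul p g1 n = fps_polymul p g2 n.
Proof. by move=> H; apply: eq_bigr => i _; rewrite H. Qed.

Lemma polymul1 g n : fps_polymul 1 g n = g n.
Proof.
rewrite /fps_polymul big_ord_recl coef1 /= mul1r subn0 big1 ?addr0 // => i _.
by rewrite coef1 mul0r.
Qed.

Lemma apply_op_pad L h n k : (size L <= k)%N ->
  apply_op L h n = \sum_(i < k) fps_polymul L`_i (iter i (@fps_deriv K) h) n.
Proof.
move=> Hk; rewrite /apply_op.
rewrite -(subnKC Hk) big_split_ord /= [X in _ = _ + X]big1 ?addr0 //.
move=> i _; rewrite nth_default ?polymul0f //.
by rewrite /= leq_addr.
Qed.

Lemma apply_op_cons a L h n :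
  apply_op (a :: L) h n = fps_polymul a h n + apply_op L (fps_deriv h) n.
Proof.
rewrite /apply_op /= big_ord_recl /=; congr (_ + _).
by apply: eq_bigr => i _ /=; rewrite /bump /= add0n -iterS iterSr.
Qed.

Lemma apply_op_nil h n : apply_op [::] h n = 0.
Proof. by rewrite /apply_op big_ord0. Qed.

Lemma apply_op_scale p L h n :
  apply_op (map (fun q => p * q) L) h n = fps_polymul p (apply_op L h) n.
Proof.
rewrite /apply_op size_map (polymul_sum p (size L) (fun i k => fps_polymul L`_i (iter i (@fps_deriv K) h) k)); apply: eq_bigr => i _.
rewrite (nth_map 0) // polymul_assoc //.
Qed.

Definition addL L1 L2 : seq {poly K} :=
  mkseq (fun i => L1`_i + L2`_i) (maxn (size L1) (size L2)).

Lemma apply_op_add L1 L2 h n :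
  apply_op (addL L1 L2) h n = apply_op L1 h n + apply_op L2 h n.
Proof.
rewrite (apply_op_pad L1 h n _ (leq_maxl (size L1) (size L2))).
rewrite (apply_op_pad L2 h n _ (leq_maxr (size L1) (size L2))).
rewrite /addL /apply_op size_mkseq.
rewrite -big_split; apply: eq_bigr => i _.
by rewrite nth_mkseq // polymulDl.
Qed.

Lemma apply_op_deriv L h n :
  fps_deriv (apply_op L h) n =
  apply_op (map (@deriv K) L) h n + apply_op (0 :: L) h n.
Proof.
rewrite apply_op_cons polymul0f add0r.
rewrite /fps_deriv /apply_op size_map mulr_sumr -big_split; apply: eq_bigr => i _.
rewrite (nth_map 0) //.
have := polymul_deriv L`_i (iter i (@fps_deriv K) h) n.
rewrite /fps_deriv => ->; congr (_ + _).
by rewrite -iterSr.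
Qed.


Lemma nth_addL L1 L2 i : (addL L1 L2)`_i = L1`_i + L2`_i.
Proof.
rewrite /addL; case: (ltnP i (maxn (size L1) (size L2))) => Hi.
  by rewrite nth_mkseq.
rewrite nth_default ?size_mkseq // !nth_default ?addr0 //.
  exact: leq_trans (leq_maxr _ _) Hi.
exact: leq_trans (leq_maxl _ _) Hi.
Qed.

Lemma nth_scale c L i : (map (fun q => c * q) L)`_i = c * L`_i.
Proof.
case: (ltnP i (size L)) => Hi; first by rewrite (nth_map 0).
by rewrite !nth_default ?size_map ?mulr0.
Qed.

Lemma nth_mderiv L i : (map (@deriv K) L)`_i = (L`_i)^`().
Proof.
case: (ltnP i (size L)) => Hi; first by rewrite (nth_map 0).
by rewrite !nth_default ?size_map ?deriv0.
Qed.

Lemma deriv_int g : fps_deriv (fps_int g) = g.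
Proof.
apply: functional_extensionality => n.
rewrite /fps_deriv /fps_int mulrC divfK // pnatr_eq0 //.
Qed.

Lemma apply_op1 p g n : apply_op [:: p] g n = fps_polymul p g n.
Proof. by rewrite apply_op_cons apply_op_nil addr0. Qed.

Lemma mono g s : has_annihilator_of_order (fps_int g) s ->
  exists s', (s' <= s)%N /\ has_annihilator_of_order g s'.
Proof.
case=> M [HsM [Hlast HM]].
set G := fps_int g.
have dG : fps_deriv G = g by exact: deriv_int.
case: M HsM Hlast HM => [//|a0 M'] /= [HsM'] Hlast HM.
have HM1 n : fps_polymul a0 G n + apply_op M' g n = 0.
  by rewrite -dG -apply_op_cons HM.
case: (eqVneq a0 0) => [a0z | a0nz].
  clear HM; case: M' HsM' Hlast HM1 => [|b M''] /=; first by rewrite a0z eqxx.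
  move=> HsM'' Hlast HM1.
  exists (size M''); split; first by rewrite -HsM''.
  exists (b :: M''); split => //; split => // n.
  by have := HM1 n; rewrite a0z polymul0f add0r.
set Phi := apply_op M' g.
set N := addL [:: a0 * a0] (addL (map (fun q => a0 * q) (addL (map (@deriv K) M') (0 :: M')))
           (map (fun q => - a0^`() * q) M')).
exists s; split => //; exists N; split; last split.
- rewrite /N /addL !size_mkseq !size_map /= size_iota HsM'; lia.
- have szN : size N = s.+1 by rewrite /N /addL !size_mkseq !size_map /= size_iota HsM'; lia.
  rewrite -nth_last szN /= !nth_addL !nth_scale !nth_addL nth_mderiv.
  rewrite (nth_default 0 (s := M')) ?HsM' // deriv0 mulr0 addr0 add0r.
  case: s HsM' szN => [|s'] HsM' szN /=.
    by rewrite mulr0 addr0 mulf_neq0.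
  rewrite nth_nil add0r mulf_neq0 //.
  move: Hlast; rewrite -nth_last HsM' /= (set_nth_default 0) // HsM' //.
- move=> n.
  have E1 k : fps_polymul a0 G k = - Phi k by apply/eqP; rewrite -addr_eq0; apply/eqP; exact: HM1.
  have E2 k : fps_polymul a0^`() G k + fps_polymul a0 g k = - fps_deriv Phi k.
    rewrite -dG -polymul_deriv /fps_deriv E1 mulrN //.
  have E3 := polymul_ext a0 _ _ n E2.
  rewrite polymulDr polymulNr (polymul_assoc a0 a0^`()) (mulrC a0 a0^`()) in E3.
  rewrite -(polymul_assoc a0^`() a0) (polymul_ext _ _ _ _ E1) polymulNr polymul_assoc in E3.
  rewrite /N. rewrite apply_op_add.
  have E4 := apply_op_add (map (fun q => a0 * q) (addL (map (@deriv K) M') (0 :: M'))) (map (fun q => - a0^`() * q) M') g n.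
  rewrite [X in _ + X = _]E4 apply_op1 !apply_op_scale.
  rewrite (polymul_ext a0 _ (fps_deriv Phi)); last first.
    by move=> k; rewrite apply_op_deriv; exact: apply_op_add.
  rewrite polymulNl.
  have Y : fps_polymul a0 (fps_deriv Phi) n =
     fps_polymul a0^`() Phi n - fps_polymul (a0 * a0) g n.
    apply: oppr_inj; rewrite -E3; ring.
  rewrite Y; ring.
Qed.

End Aux.


Section Rec.
Variable K : numFieldType.
Implicit Types (p q : {poly K}) (g h : fps K) (L : seq {poly K}).

Definition ff (i : nat) : {poly K} := \prod_(u < i) ('X - (u%:R)%:P).

Definition rec (R : nat -> {poly K}) h (N : nat) : K :=
  \sum_(j < N.+1) (R j).[(N - j)%:R] * h (N - j)%N.

Lemma size_ff i : size (ff i) = i.+1.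
Proof. by rewrite /ff size_prod_XsubC -[index_enum _]enumT size_enum_ord. Qed.

Lemma ff_monic i : ff i \is monic.
Proof. exact: monic_prod_XsubC. Qed.

Lemma ff_top i : (ff i)`_i = 1.
Proof. by have := monicP (ff_monic i); rewrite lead_coefE size_ff. Qed.

Lemma ff_high i k : (i < k)%N -> (ff i)`_k = 0.
Proof. by move=> H; rewrite nth_default // size_ff. Qed.

Lemma horner_ff i x : (ff i).[x] = \prod_(u < i) (x - u%:R).
Proof. by rewrite /ff horner_prod; apply: eq_bigr => u _; rewrite hornerXsubC. Qed.

Lemma ff_vanish i t : (t < i)%N -> (ff i).[t%:R] = 0.
Proof.
move=> Ht; rewrite horner_ff; apply/eqP; rewrite prodf_seq_eq0.
apply/hasP; exists (Ordinal Ht); first by rewrite mem_index_enum.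
by rewrite /= subrr eqxx.
Qed.

Lemma ff_S i x : (ff i.+1).[x] = (ff i).[x] * (x - i%:R).
Proof. by rewrite !horner_ff big_ord_recr. Qed.

Lemma iter_deriv_eq i h t :
  iter i (@fps_deriv K) h t = (ff i).[(t + i)%:R] * h (t + i)%N.
Proof.
elim: i t => [|i IH] t.
  by rewrite /ff big_ord0 hornerC mul1r addn0.
rewrite iterS /fps_deriv IH.
rewrite !horner_ff big_ord_recr /= addSnnS.
have -> : (t + i.+1)%:R - i%:R = t.+1%:R :> K by rewrite -natrB; [congr _%:R; lia | lia].
by rewrite mulrA [X in _ = X * _]mulrC.
Qed.


Lemma reidx (F G : nat -> K) n i :
  (forall k, (k < i)%N -> F k = 0) ->
  (forall j, (j <= n)%N -> (n < j + i)%N -> G j = 0) ->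
  (forall j, (j + i <= n)%N -> F (j + i)%N = G j) ->
  \sum_(k < n.+1) F k = \sum_(j < n.+1) G j.
Proof.
move=> HF HG HFG.
case: (leqP i n.+1) => Hi; last first.
  rewrite big1; last by move=> j _; apply: HF; move: (ltn_ord j) Hi => /=; lia.
  rewrite big1 // => j _; apply: HG; move: (ltn_ord j) Hi => /=; lia.
rewrite -!(big_mkord xpredT).
rewrite (@big_cat_nat _ _ _ i 0 n.+1 _ _ (leq0n i) Hi) /= big1_seq ?add0r; last first.
  by move=> k /andP[_]; rewrite mem_index_iota => /andP[_ Hk]; apply: HF.
have Hi2 : (n.+1 - i <= n.+1)%N by rewrite leq_subr.
rewrite [RHS](@big_cat_nat _ _ _ (n.+1 - i) 0 n.+1 _ _ (leq0n _) Hi2) /= [X in _ = _ + X]big1_seq ?addr0; last first.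
  move=> j /andP[_]; rewrite mem_index_iota => /andP[Hj1 Hj2]; apply: HG; lia.
rewrite -{1}(add0n i) big_addn.
apply: eq_big_nat => j /andP[_ Hj]; apply: HFG; lia.
Qed.

Definition RL L (j : nat) : {poly K} := \sum_(i < size L) L`_i`_(j + i) *: ff i.

Lemma apply_rec L h n : (forall i k, (k < i)%N -> L`_i`_k = 0) ->
  apply_op L h n = rec (RL L) h n.
Proof.
move=> HL; rewrite /rec /RL.
under eq_bigr do rewrite horner_sum mulr_suml.
rewrite exchange_big /apply_op; apply: eq_bigr => i _.
rewrite /fps_polymul.
apply: (@reidx (fun k => L`_i`_k * iter i (@fps_deriv K) h (n - k)%N)
  (fun j => (L`_i`_(j + i) *: ff i).[(n - j)%:R] * h (n - j)%N) n i).
- by move=> k Hk; rewrite HL // mul0r.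
- move=> j Hj1 Hj2; rewrite hornerZ ff_vanish ?mulr0 ?mul0r //; lia.
- move=> j Hj; rewrite hornerZ iter_deriv_eq -mulrA.
  by have -> : (n - (j + i) + i = n - j)%N by lia.
Qed.


Fixpoint ffc (d : nat) (p : {poly K}) : nat -> K :=
  match d with
  | 0 => fun i => if i == 0%N then p`_0 else 0
  | d'.+1 => fun i => if i == d then p`_d else ffc d' (p - p`_d *: ff d) i
  end.

Lemma ffc_spec d p : (size p <= d.+1)%N -> p = \sum_(i < d.+1) ffc d p i *: ff i.
Proof.
elim: d p => [|d IH] p Hp.
  rewrite big_ord_recl big_ord0 addr0 /= /ff big_ord0 alg_polyC.
  exact: size1_polyC.
set q := p - p`_d.+1 *: ff d.+1.
have Hq : (size q <= d.+1)%N.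
  apply/leq_sizeP => j Hj; rewrite coefB coefZ.
  case: (eqVneq j d.+1) => [->|Hne]; first by rewrite ff_top mulr1 subrr.
  have Hj' : (d.+1 < j)%N by rewrite ltn_neqAle eq_sym Hne.
  by rewrite ff_high // mulr0 subr0 nth_default //; apply: leq_trans Hp Hj'.
rewrite big_ord_recr /= eqxx.
have -> : \sum_(i < d.+1) (if (i == d.+1 :> nat) then p`_d.+1 else ffc d q i) *: ff i =
          \sum_(i < d.+1) ffc d q i *: ff i.
  by apply: eq_bigr => i _; rewrite ltn_eqF.
by rewrite -IH // /q subrK.
Qed.

Lemma ffsum_size d (c : nat -> K) : (size (\sum_(i < d.+1) c i *: ff i)%R <= d.+1)%N.
Proof.
apply/leq_sizeP => j Hj; rewrite coef_sum big1 // => i _.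
by rewrite coefZ ff_high ?mulr0 //; apply: leq_trans (ltn_ord i) Hj.
Qed.

Lemma ffsum_top d (c : nat -> K) : (\sum_(i < d.+1) c i *: ff i)`_d = c d.
Proof.
rewrite coef_sum big_ord_recr /= coefZ ff_top mulr1 big1 ?add0r // => i _.
by rewrite coefZ ff_high ?mulr0.
Qed.

Lemma nth_rcons0 L i : (rcons L 0)`_i = L`_i.
Proof.
rewrite nth_rcons; case: ltnP => // H.
by case: eqP => _; rewrite nth_default.
Qed.

Lemma trim L h : (exists i, L`_i != 0) -> (forall n, apply_op L h n = 0) ->
  exists r, (r < size L)%N /\ has_annihilator_of_order h r.
Proof.
elim/last_ind: L => [|L a IH] [i Hi] HL; first by rewrite nth_nil eqxx in Hi.
case: (eqVneq a 0) => [az|anz]; last first.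
  exists (size L); rewrite size_rcons; split => //.
  exists (rcons L a); rewrite size_rcons last_rcons; split => //.
move: Hi HL; rewrite az nth_rcons0 => Hi HL.
have HL' n : apply_op L h n = 0.
  transitivity (apply_op (rcons L 0) h n); last exact: HL.
  rewrite (@apply_op_pad K L h n (size L).+1) // /apply_op size_rcons.
  by apply: eq_bigr => k _; rewrite nth_rcons0.
have [r [Hr Hann]] := IH (ex_intro _ i Hi) HL'.
by exists r; rewrite size_rcons; split => //; apply: ltnW.
Qed.

Lemma G2 (R : nat -> {poly K}) h d J :
  (forall j, (size (R j) <= d.+1)%N) -> (forall j, (J < j)%N -> R j = 0) ->
  (exists j, R j != 0) -> (forall N, rec R h N = 0) ->
  exists r, (r <= d)%N /\ has_annihilator_of_order h r.
Proof.
move=> Hsz HJ [j0 Hj0] Hrec.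
set L := mkseq (fun i => \sum_(j < J.+1) ffc d (R j) i *: 'X^(j + i)) d.+1.
have HLc i k : (i < d.+1)%N -> L`_i`_k = \sum_(j < J.+1) ffc d (R j) i * ((k == j + i)%N)%:R.
  by move=> Hi; rewrite nth_mkseq // coef_sum; apply: eq_bigr => j _; rewrite coefZ coefXn.
have HL0 i k : (k < i)%N -> L`_i`_k = 0.
  move=> Hk; case: (ltnP i d.+1) => Hi; last by rewrite [L`_i]nth_default ?coef0 // /L size_mkseq.
  rewrite HLc // big1 // => j _.
  have -> : (k == j + i)%N = false by apply/negbTE; rewrite neq_ltn (ltn_addl _ Hk).
  by rewrite mulr0.
have HRL : RL L = R.
  apply: functional_extensionality => j; rewrite /RL /L size_mkseq -/L.
  case: (leqP j J) => HjJ.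
    rewrite [RHS](@ffc_spec d (R j) (Hsz j)); apply: eq_bigr => i _.
    rewrite HLc // (bigD1 (Ordinal (HjJ : (j < J.+1)%N))) //= eqxx mulr1 big1 ?addr0 //.
    move=> j' Hj'; rewrite eqn_add2r.
    have -> : (j == j') = false by apply/negbTE; rewrite eq_sym; move: Hj'; apply: contra => /eqP H; apply/eqP; apply: val_inj.
    by rewrite mulr0.
  rewrite HJ // big1 // => i _; rewrite HLc // big1 ?scale0r // => j' _.
  have -> : (j + i == j' + i)%N = false.
    by apply/negbTE; rewrite eqn_add2r neq_ltn; apply/orP; right; apply: leq_trans (ltn_ord j') HjJ.
  by rewrite mulr0.
have Hnz : exists i, L`_i != 0.
  have Hj0J : (j0 <= J)%N by rewrite leqNgt; apply/negP => H; rewrite HJ // eqxx in Hj0.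
  have [i Hi] : exists i : 'I_d.+1, ffc d (R j0) i != 0.
    apply: NNPP => H; move: Hj0; rewrite (@ffc_spec d (R j0) (Hsz j0)) big1 ?eqxx // => i _.
    case: (eqVneq (ffc d (R j0) i) 0) => [->|Hne]; first by rewrite scale0r.
    by exfalso; apply: H; exists i.
  exists i; apply/eqP => H.
  have := HLc i (j0 + i)%N (ltn_ord i); rewrite H coef0.
  rewrite (bigD1 (Ordinal (Hj0J : (j0 < J.+1)%N))) //= eqxx mulr1 big1 ?addr0.
    by move=> E; rewrite -E eqxx in Hi.
  move=> j' Hj'; rewrite eqn_add2r.
  have -> : (j0 == j') = false by apply/negbTE; rewrite eq_sym; move: Hj'; apply: contra => /eqP H'; apply/eqP; apply: val_inj.
  by rewrite mulr0.
have Hap n : apply_op L h n = 0 by rewrite apply_rec // HRL Hrec.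
have [r [Hr Hann]] := @trim L h Hnz Hap.
by exists r; split => //; move: Hr; rewrite /L size_mkseq.
Qed.

End Rec.


Arguments rec {K}.
Arguments RL {K}.

Section Bound.
Variable K : numFieldType.
Implicit Types (p q : {poly K}) (f g h : fps K) (L : seq {poly K}).

Lemma initial f r : has_annihilator_of_order f r ->
  exists (P : nat -> {poly K}) (J : nat),
    [/\ (forall N, rec P f N = 0), (forall j, (size (P j) <= r.+1)%N),
        P J != 0 & (forall j, (J < j)%N -> P j = 0)].
Proof.
case=> L [HsL [Hlast HL]].
set L' := map (fun p => 'X^r * p) L.
have HL'0 i k : (k < i)%N -> L'`_i`_k = 0.
  move=> Hk; rewrite nth_scale.
  case: (leqP i r) => Hir.
    by rewrite coefXnM ifT //; apply: leq_trans Hk Hir.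
  by rewrite [L`_i]nth_default ?mulr0 ?coef0 // HsL.
have Hrec N : rec (RL L') f N = 0.
  by rewrite -(@apply_rec K L' f N HL'0) apply_op_scale; apply: polymulf0 => k; exact: HL.
have Hsz j : (size (RL L' j) <= r.+1)%N.
  by rewrite /RL size_map HsL; exact: (@ffsum_size K r (fun i => L'`_i`_(j + i))).
set S := (\max_(i < size L') size (nth 0%R L' i))%N.
have HS j : (S <= j)%N -> RL L' j = 0.
  move=> Hj; rewrite /RL big1 // => i _.
  rewrite nth_default ?scale0r //.
  have := @bigop.leq_bigmax _ (fun i : 'I_(size L') => size (nth 0%R L' i)) i. move=> H1; apply: leq_trans H1 _.
  by apply: leq_trans Hj (leq_addr _ _).
have Hex : exists j, RL L' j != 0.
  exists (size L`_r).-1.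
  apply/eqP => H; have := congr1 (fun p => p`_r) H.
  rewrite /RL size_map HsL (@ffsum_top K r (fun i => L'`_i`_((size L`_r).-1 + i))) coef0 nth_scale coefXnM.
  rewrite ltnNge leq_addl /= addnK => /eqP; apply/negP.
  have <- : last 0 L = L`_r by rewrite -nth_last HsL.
  by rewrite -lead_coefE lead_coef_eq0.
have Hub j : RL L' j != 0 -> (j <= S)%N.
  by move=> Hj; rewrite leqNgt; apply/negP => H; rewrite HS ?eqxx // ltnW in Hj.
case: (ex_maxnP Hex Hub) => J HJ HJmax.
exists (RL L'), J; split => // j Hj.
by apply/eqP; apply: NNPP => /negP H; have := HJmax j H; rewrite leqNgt Hj.
Qed.

Lemma iter_int_low m f n : (n < m)%N -> iter m (@fps_int K) f n = 0.
Proof.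
elim: m n => [//|m IH] [|n] Hn; rewrite iterS /fps_int //.
by rewrite IH ?mul0r.
Qed.

Lemma iter_int_ff m f n :
  (ff K m).[n%:R] * iter m (@fps_int K) f n = if (m <= n)%N then f (n - m)%N else 0.
Proof.
elim: m n => [|m IH] n.
  by rewrite /ff big_ord0 hornerC mul1r subn0.
case: n => [|n].
  by rewrite ff_vanish // mul0r.
rewrite iterS horner_ff big_ord_recl /= subr0.
have -> : \prod_(i < m) (n.+1%:R - (bump 0 i)%:R) = (ff K m).[n%:R] :> K.
  by rewrite horner_ff; apply: eq_bigr => i _; rewrite /bump /= add1n; ring.
rewrite ltnS subSS -IH -/(fps_int (iter m (@fps_int K) f)).
rewrite /fps_int.
have Hc : n.+1%:R != 0 :> K by rewrite pnatr_eq0.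
set A := (ff K m).[n%:R]; set B := iter m _ f n.
by rewrite [_ * A]mulrC -mulrA [X in _ * X]mulrCA mulfV // mulr1.
Qed.


Lemma shift_rec (P : nat -> {poly K}) f m : (forall N, rec P f N = 0) ->
  forall N, rec (fun j => P j \Po ('X - (m%:R)%:P))
                (fun n => if (m <= n)%N then f (n - m)%N else 0) N = 0.
Proof.
move=> HP N; rewrite /rec.
case: (ltnP N m) => HNm.
  rewrite big1 // => j _; rewrite ifF ?mulr0 //; apply/negbTE; rewrite -ltnNge.
  by apply: leq_ltn_trans (leq_subr _ _) HNm.
have -> : N.+1 = ((N - m).+1 + m)%N by lia.
rewrite big_split_ord /= [X in _ + X]big1 ?addr0; last first.
  move=> j _; rewrite ifF ?mulr0 //; apply/negbTE; rewrite -ltnNge.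
  have := ltn_ord j; lia.
transitivity (rec P f (N - m)%N); last exact: HP.
rewrite /rec; apply: eq_bigr => j _.
have Hj := ltn_ord j; rewrite /= in Hj.
rewrite ifT; last by lia.
rewrite horner_comp hornerXsubC -natrB; last by lia.
by have -> : (N - j - m = N - m - j)%N by lia.
Qed.

Lemma prod_shift (F : nat -> K) a b :
  \prod_(a <= i < b) F i = \prod_(0 <= i < b - a) F (i + a)%N.
Proof. by rewrite -{1}(add0n a) big_addn. Qed.

Definition E (J m j : nat) : {poly K} :=
  \prod_(t < J - j) ('X - (t%:R)%:P) * \prod_(t < j) ('X - ((m - j + t)%:R)%:P).

Lemma split_ff J m j N : (j <= J)%N -> (J < m)%N -> (j <= N)%N ->
  (ff K m).[(N - j)%:R] = (\prod_(J <= c < m) (N%:R - c%:R)) * (E J m j).[(N - j)%:R].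
Proof.
move=> HjJ HJm HjN.
set x := (N - j)%:R : K.
rewrite horner_ff hornerM !horner_prod.
under [X in _ = _ * (X * _)]eq_bigr do rewrite hornerXsubC.
under [X in _ = _ * (_ * X)]eq_bigr do rewrite hornerXsubC.
rewrite -(big_mkord xpredT (fun u => x - u%:R)) -(big_mkord xpredT (fun u => x - u%:R)).
rewrite -(big_mkord xpredT (fun u => x - (m - j + u)%:R)).
have H1 : (0 <= J - j)%N by [].
have H2 : (J - j <= m)%N by lia.
rewrite (@big_cat_nat _ _ _ (J - j) 0 m _ _ H1 H2) /=.
have H3 : (J - j <= m - j)%N by lia.
have H4 : (m - j <= m)%N by lia.
rewrite (@big_cat_nat _ _ _ (m - j) (J - j) m _ _ H3 H4) /=.
rewrite [X in _ * (X * _) = _]prod_shift [X in _ * (_ * X) = _]prod_shift.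
rewrite [X in _ = X * _]prod_shift.
have -> : (m - (m - j) = j)%N by lia.
have -> : (m - j - (J - j) = m - J)%N by lia.
have -> : \prod_(0 <= i < m - J) (x - (i + (J - j))%:R) =
          \prod_(0 <= i < m - J) (N%:R - (i + J)%:R :> K).
  apply: eq_big_nat => i _; rewrite /x !natrD !natrB //; ring.
have -> : \prod_(0 <= i < j) (x - (i + (m - j))%:R) =
          \prod_(0 <= i < j) (x - (m - j + i)%:R).
  by apply: eq_big_nat => i _; rewrite addnC.
by rewrite mulrCA.
Qed.


Definition Qop (P : nat -> {poly K}) J m (j : nat) : {poly K} :=
  (P j \Po ('X - (m%:R)%:P)) * E J m j.

Lemma bound_rec (P : nat -> {poly K}) J f m :
  (forall N, rec P f N = 0) -> (forall j, (J < j)%N -> P j = 0) -> (J < m)%N ->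
  forall N, rec (Qop P J m) (iter m (@fps_int K) f) N = 0.
Proof.
move=> HP HJ HJm N.
case: (ltnP N m) => HNm.
  rewrite /rec big1 // => j _; rewrite iter_int_low ?mulr0 //.
  by apply: leq_ltn_trans (leq_subr _ _) HNm.
set C := \prod_(J <= c < m) (N%:R - c%:R : K).
have key : rec (fun j => P j \Po ('X - (m%:R)%:P))
              (fun n => if (m <= n)%N then f (n - m)%N else 0) N =
           C * rec (Qop P J m) (iter m (@fps_int K) f) N.
  rewrite /rec mulr_sumr; apply: eq_bigr => j _.
  have Hj := ltn_ord j.
  case: (leqP j J) => HjJ.
    have HjN : (j <= N)%N by rewrite -ltnS.
    rewrite -iter_int_ff (@split_ff J m j N) //.
    rewrite /Qop [in RHS]hornerM -/C; ring.
  by rewrite /Qop HJ // comp_poly0 mul0r horner0 !mul0r mulr0.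
have CN : C != 0.
  rewrite /C prodf_seq_neq0; apply/allP => c; rewrite mem_index_iota => /andP[_ Hc] /=.
  rewrite subr_eq0 eqr_nat; apply/negP => /eqP E1; lia.
move: key; rewrite shift_rec // => /esym /eqP; rewrite mulf_eq0 (negbTE CN) /=.
by move/eqP.
Qed.

Lemma size_prodX n (F : nat -> K) : size (\prod_(t < n) ('X - (F t)%:P)) = n.+1.
Proof. by rewrite size_prod_XsubC -[index_enum _]enumT size_enum_ord. Qed.

Lemma E_neq0 J m j : E J m j != 0.
Proof.
by rewrite /E mulf_neq0 // monic_neq0 // monic_prod_XsubC.
Qed.

Lemma size_E J m j : (j <= J)%N -> (size (E J m j) <= J.+1)%N.
Proof.
move=> HjJ; apply: leq_trans (size_mul_leq _ _) _.
rewrite size_prodX (size_prodX _ (fun t => (m - j + t)%:R)); lia.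
Qed.

Lemma Qop_props (P : nat -> {poly K}) J m r :
  (forall j, (size (P j) <= r.+1)%N) -> P J != 0 -> (forall j, (J < j)%N -> P j = 0) ->
  [/\ forall j, (size (Qop P J m j) <= (r + J).+1)%N, Qop P J m J != 0 &
      forall j, (J < j)%N -> Qop P J m j = 0].
Proof.
move=> Hsz HPJ HJ; split.
- move=> j; case: (leqP j J) => HjJ; last by rewrite /Qop HJ // comp_poly0 mul0r size_poly0.
  apply: leq_trans (size_mul_leq _ _) _.
  rewrite size_comp_poly2 ?size_XsubC //.
  have -> : (r + J).+1 = (r.+1 + J.+1).-1 by rewrite addnS.
  by rewrite -!subn1 leq_sub2r // leq_add // size_E.
- by rewrite /Qop mulf_neq0 ?E_neq0 // comp_poly2_eq0 ?size_XsubC.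
- by move=> j Hj; rewrite /Qop HJ // comp_poly0 mul0r.
Qed.

Lemma ev_bound f r : has_annihilator_of_order f r ->
  exists J, forall m, (J < m)%N ->
    exists r', (r' <= r + J)%N /\ has_annihilator_of_order (iter m (@fps_int K) f) r'.
Proof.
move=> Hf; have [P [J [HP Hsz HPJ HJ]]] := @initial f r Hf.
exists J => m HJm.
have [Qs Q0 QJ] := @Qop_props P J m r Hsz HPJ HJ.
apply: (@G2 K (Qop P J m) _ (r + J) J Qs QJ); first by exists J.
exact: bound_rec.
Qed.

End Bound.


Section Final.
Variable K : numFieldType.
Implicit Types (f g h : fps K).

Definition MO f m r := min_annihilator_order (iter m (@fps_int K) f) r.

Lemma exists_min (P : nat -> Prop) : (exists n, P n) ->
  exists n, P n /\ forall k, P k -> (n <= k)%N.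
Proof.
case=> n; elim/ltn_ind: n => n IH Hn.
case: (classic (exists k, (k < n)%N /\ P k)) => [[k [Hk Pk]]|H].
  exact: IH k Hk Pk.
exists n; split => // k Pk; rewrite leqNgt; apply/negP => Hk; by apply: H; exists k.
Qed.

Lemma min_unique h r r' : min_annihilator_order h r -> min_annihilator_order h r' -> r = r'.
Proof.
move=> [H1 H2] [H3 H4]; apply/eqP; rewrite eqn_leq; apply/andP; split.
  exact: H2. exact: H4.
Qed.

Lemma MO_mono f m r r' : MO f m r -> MO f m.+1 r' -> (r <= r')%N.
Proof.
move=> [_ Hmin] [Hann _].
have [s' [Hs' Hann']] := @mono K (iter m (@fps_int K) f) r' Hann.
exact: leq_trans (Hmin _ Hann') Hs'.
Qed.

Variables (f : fps K) (J B : nat).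
Hypothesis Hb : forall m, (J < m)%N ->
  exists r', (r' <= B)%N /\ has_annihilator_of_order (iter m (@fps_int K) f) r'.

Lemma MO_exists m : (J < m)%N -> exists r, (r <= B)%N /\ MO f m r.
Proof.
move=> Hm; have [r' [Hr' Hann]] := Hb m Hm.
have [r [Hr Hmin]] := @exists_min (has_annihilator_of_order (iter m (@fps_int K) f)) (ex_intro _ r' Hann).
exists r; split; last by split.
exact: leq_trans (Hmin _ Hann) Hr'.
Qed.

Lemma MO_mono_iter m i r r' : (J < m)%N -> MO f m r -> MO f (m + i) r' -> (r <= r')%N.
Proof.
move=> Hm HMO; elim: i r' => [|i IH] r'.
  by rewrite addn0 => H; rewrite (@min_unique _ _ _ HMO H).
have [r'' [_ H'']] := @MO_exists (m + i)%N (leq_trans Hm (leq_addr _ _)).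
rewrite addnS => H; apply: leq_trans (IH _ H'') (@MO_mono _ _ _ _ H'' H).
Qed.

Lemma stab k m r : (J < m)%N -> MO f m r -> (B - r <= k)%N ->
  exists m0 r0, forall i, MO f (m0 + i) r0.
Proof.
elim: k m r => [|k IH] m r Hm HMO Hk;
  (case: (classic (forall i, MO f (m + i) r)) => [H|H]; first by exists m, r);
  have [i Hi] := not_all_ex_not _ _ H;
  have [r' [Hr'B Hr']] := @MO_exists (m + i)%N (leq_trans Hm (leq_addr _ _));
  have Hrr' := @MO_mono_iter _ _ _ _ Hm HMO Hr';
  (have Hne : r != r' by apply/eqP => E; apply: Hi; rewrite E);
  have Hlt : (r < r')%N by rewrite ltn_neqAle Hne Hrr'.
  exfalso; move: Hk Hlt Hr'B; lia.
apply: (IH (m + i)%N r' (leq_trans Hm (leq_addr _ _)) Hr').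
move: Hk Hlt Hr'B; lia.
Qed.

End Final.

Lemma final (K : numFieldType) (f : fps K) :
  Dfinite f -> exists m : nat, stable (iter m (@fps_int K) f).
Proof.
case=> r Hr.
have [J HJ] := @ev_bound K f r Hr.
have [r1 [Hr1 HMO1]] := @MO_exists K f J (r + J) HJ J.+1 (ltnSn J).
have [m0 [r0 H0]] := @stab K f J (r + J) HJ (r + J - r1) J.+1 r1 (ltnSn J) HMO1 (leqnn _).
exists m0; split.
  by exists r0; have := H0 0%N; rewrite addn0 => -[].
exists (fun i => iter i (@fps_int K) (iter m0 (@fps_int K) f)); split => //; split.
  by move=> i; rewrite iterS deriv_int.
exists r0 => i; have := H0 i; rewrite /MO addnC iterD //.
Qed.


Theorem theorem4p5 (R : realType) (f : fps R[i]) :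
  Dfinite f -> exists m : nat, stable (iter m (@fps_int R[i]) f).
Proof. exact: (@final R[i] f). Qed.
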